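(* Let $V$ be a vertex algebra, $g$ an automorphism of $V$ of finite order $T$, and $n,m\in(1/T)\mathbb{N}$. Then the quotient space $\tilde{A}_{g,n,m}(V)=V/\tilde{O}_{g,n,m}(V)$ is an $\tilde{A}_{g,n}(V)$–$\tilde{A}_{g,m}(V)$-bimodule, where the left action is well defined by $(u+\tilde{O}_{g,n}(V))\cdot(w+\tilde{O}_{g,n,m}(V))=u\,\bar{\bullet}_{g,m}^{\,n}\,w+\tilde{O}_{g,n,m}(V)$ and the right action is well defined by $(w+\tilde{O}_{g,n,m}(V))\cdot(v+\tilde{O}_{g,m}(V))=w\bullet_{g,m}^{\,n}v+\tilde{O}_{g,n,m}(V)$, for $u,v,w\in V$.
   Context: $V$ is a vertex algebra with vacuum $\mathbf{1}$, vertex operator $Y(v,x)=\sum_{k\in\mathbb Z}v_kx^{-k-1}$ and $\mathcal{D}v=v_{-2}\mathbf 1$. $g$ is an automorphism ($g\mathbf 1=\mathbf 1$, $gY(u,x)v=Y(gu,x)gv$) with $g^T=1$, and $V=\bigoplus_{r=0}^{T-1}V^r$, $V^r=\{v: gv=e^{-2\pi\sqrt{-1}r/T}v\}$. For $k,l\in\{0,\dots,T-1\}$ let $\delta_k(l)=1$ if $k\ge l$, $\delta_k(l)=0$ if $k<l$, and $\delta_k(T)=0$. Every $n\in(1/T)\mathbb Z$ is written uniquely $n=\lfloor n\rfloor+\bar n/T$ with $\bar n\in\{0,\dots,T-1\}$. Powers $(1+y)^\alpha$ are expanded as binomial series in nonnegative powers of $y$, and $Y(u,\log(1+y))v$ denotes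 $Y(u,x)v\in V((x))$ with $x=\log(1+y)=\sum_{k\ge1}(-1)^{k-1}y^k/k$ substituted. For $u\in V^r$, $v\in V$, $m,n,p\in(1/T)\mathbb N$ with $\bar p-\bar n\equiv r\pmod T$ define $u\bullet_{g,m,p}^{\,n}v=\sum_{i=0}^{\lfloor p\rfloor}(-1)^i\binom{\lfloor m\rfloor+\lfloor n\rfloor-\lfloor p\rfloor-1+\delta_{\bar m}(r)+\delta_{\bar n}(T-r)+i}{i}\operatorname{Res}_y\frac{(1+y)^{-1+\lfloor m\rfloor+\delta_{\bar m}(r)+r/T}}{y^{\lfloor m\rfloor+\lfloor n\rfloor-\lfloor p\rfloor+\delta_{\bar m}(r)+\delta_{\bar n}(T-r)+i}}Y(u,\log(1+y))v,$ and $u\bullet_{g,m,p}^{\,n}v=0$ if $\bar p-\bar n\not\equiv r\pmod T$; extend bilinearly. Put $\bar\bullet_{g,m}^{\,n}=\bullet_{g,m,n}^{\,n}$, $\bullet_{g,m}^{\,n}=\bullet_{g,m,m}^{\,n}$, $\bullet_{g,n}=\bullet_{g,n,n}^{\,n}$. For $u\in V^r,v\in V$: $u\diamond_{g,m}^{\,n}v=\operatorname{Res}_y\frac{(1+y)^{-1+\delta_{\bar m}(r)+\lfloor m\rfloor+r/T}}{y^{\lfloor m\rfloor+\lfloor n\rfloor+\delta_{\bar m}(r)+\delta_{\bar n}(T-r)+1}}Y(u,\log(1+y))v$ (extended bilinearly). Let $L_{n,m}(V)=\mathrm{span}\{(\mathcal D+m-n)u:u\in V\}$ and $\tilde O'_{g,n,m}(V)=\mathrm{span}\{u\diamond_{g,m}^{\,n}v:u,v\in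 V\}+L_{n,m}(V)$. Let $\tilde O''_{g,n,m}(V)$ be the span of all $u\bullet_{g,m,p_3}^{\,n}\big((a\bullet_{g,p_1,p_2}^{\,p_3}b)\bullet_{g,m,p_1}^{\,p_3}c-a\bullet_{g,m,p_2}^{\,p_3}(b\bullet_{g,m,p_1}^{\,p_2}c)\big)$ with $a,b,c,u\in V$, $p_1,p_2,p_3\in(1/T)\mathbb N$; let $\tilde O'''_{g,n,m}(V)=\sum_{p_1,p_2\in(1/T)\mathbb N}\big(V\bullet_{g,p_1,p_2}^{\,n}\tilde O'_{g,p_2,p_1}(V)\big)\bullet_{g,m,p_1}^{\,n}V$ (spans of such products); and $\tilde O_{g,n,m}(V)=\tilde O'_{g,n,m}(V)+\tilde O''_{g,n,m}(V)+\tilde O'''_{g,n,m}(V)$. Finally $\tilde O_{g,n}(V)=\tilde O'_{g,n,n}(V)$ and $\tilde A_{g,n}(V)=V/\tilde O_{g,n}(V)$, which is an associative algebra with product induced by $\bullet_{g,n}$ and unit $\mathbf 1+\tilde O_{g,n}(V)$. *)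

(* Defs.v *)
From HB Require Import structures.
From mathcomp Require Import all_boot all_order all_algebra.
Set Implicit Arguments. Unset Strict Implicit. Unset Printing Implicit Defensive.
Import Order.TTheory GRing.Theory Num.Theory.
Local Open Scope ring_scope.

(* Vertex algebras (Lepowsky--Li axioms: truncation, vacuum, creation,      *)
(* Jacobi/Borcherds identity) over a field K.  vY u k v is the mode u_k v.  *)

Definition gbinom (K : fieldType) (a : K) (i : nat) : K :=
  (\prod_(j < i) (a - j%:R)) / (i`!)%:R.

Record vertex_algebra (K : fieldType) (V : lmodType K) := VertexAlgebra {
  vY : V -> int -> V -> V;
  vvac : V;
  vtrunc : V -> V -> nat;
  vY_linl : forall (k : int) (v : V) (a : K) (u1 u2 : V),
      vY (a *: u1 + u2) k v = a *: vY u1 k v + vY u2 k v;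
  vY_linr : forall (u : V) (k : int) (a : K) (v1 v2 : V),
      vY u k (a *: v1 + v2) = a *: vY u k v1 + vY u k v2;
  vY_trunc : forall (u v : V) (k : int), (vtrunc u v)%:Z <= k -> vY u k v = 0;
  vY_vacuum : forall (k : int) (v : V), vY vvac k v = if k == -1 then v else 0;
  vY_creation0 : forall (u : V) (k : int), 0 <= k -> vY u k vvac = 0;
  vY_creation1 : forall u : V, vY u (-1) vvac = u;
  vY_jacobi : forall (u w v : V) (p q r : int),
      \sum_(i < absz ((vtrunc u w)%:Z - r))
          gbinom (p%:~R) i *: vY (vY u (r + i%:Z) w) (p + q - i%:Z) v
      = \sum_(i < absz ((vtrunc w v)%:Z - q))
          ((-1) ^+ i * gbinom (r%:~R) i) *: vY u (p + r - i%:Z) (vY w (q + i%:Z) v)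
        - ((-1) ^ r) *: \sum_(i < absz ((vtrunc u v)%:Z - p))
          ((-1) ^+ i * gbinom (r%:~R) i) *: vY w (q + r - i%:Z) (vY u (p + i%:Z) v)
}.

Section PowerSeries.
Variable K : fieldType.
Definition ps := nat -> K.
Definition ps1 : ps := fun n => (n == 0%N)%:R.
Definition psmul (f g : ps) : ps := fun n => \sum_(i < n.+1) f i * g (n - i)%N.
Definition psexp (f : ps) (k : nat) : ps := iter k (psmul f) ps1.
(* coefficients b_0..b_n of the inverse series of f (f 0 <> 0) *)
Fixpoint psinv_seq (f : ps) (n : nat) : seq K :=
  match n with
  | 0 => [:: (f 0%N)^-1]
  | n'.+1 => let s := psinv_seq f n' in
      rcons s (- (f 0%N)^-1 * \sum_(i < n'.+1) f i.+1 * nth 0 s (n' - i)%N)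
  end.
Definition psinv (f : ps) : ps := fun n => nth 0 (psinv_seq f n) n.
Definition pszexp (f : ps) (e : int) : ps :=
  match e with Posz k => psexp f k | Negz k => psexp (psinv f) k.+1 end.
(* (1+y)^a = sum_k binom(a,k) y^k *)
Definition binser (a : K) : ps := fun k => gbinom a k.
(* log(1+y)/y = sum_{n>=0} (-1)^n y^n/(n+1) *)
Definition logy : ps := fun n => (-1) ^+ n / (n.+1)%:R.
(* Res_y (1+y)^a y^(-N) (log(1+y))^(-k-1)
   = coefficient of y^(N+k) in (1+y)^a (log(1+y)/y)^(-k-1) *)
Definition resc (a : K) (N k : int) : K :=
  if (0 <= N + k) then psmul (binser a) (pszexp logy (- k - 1)) (absz (N + k))
  else 0.
End PowerSeries.

Section Twisted.
Variables (K : fieldType) (V : lmodType K) (A : vertex_algebra V).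
Variables (T : nat) (om : K) (g : V -> V).

(* Res_y (1+y)^a / y^N  Y(u, log(1+y)) v  (a finite sum by truncation) *)
Definition resY (a : K) (N : int) (u v : V) : V :=
  \sum_(i < (vtrunc A u v + absz N)%N)
     resc a N (i%:Z - (absz N)%:Z) *: vY A u (i%:Z - (absz N)%:Z) v.

(* projection of u on V^r = {v | g v = om^r v}, with om = e^{-2 pi i / T} *)
Definition proj (r : nat) (u : V) : V :=
  (T%:R)^-1 *: \sum_(j < T) (om ^+ (r * j))^-1 *: iter j g u.

(* Elements of (1/T)N are represented by their numerators: m = M / T.
   floor m = M %/ T,  bar m = M %% T. *)
Definition delta (k l : nat) : nat := (l <= k)%N.

(* u bullet_{g,m,p}^n v for u in V^r ; here m = M/T, p = P/T, n = N/T *)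
Definition bullet_h (r M P N : nat) (u v : V) : V :=
  let fm := (M %/ T)%N in let bm := (M %% T)%N in
  let fn := (N %/ T)%N in let bn := (N %% T)%N in
  let fp := (P %/ T)%N in let bp := (P %% T)%N in
  let d1 := delta bm r in let d2 := delta bn (T - r) in
  let alpha : K := (- 1 + fm%:Z + d1%:Z)%:~R + r%:R / T%:R in
  if ((bp + T - bn) %% T == r %% T)%N then
    \sum_(i < fp.+1)
      ((-1) ^+ i * gbinom ((fm%:Z + fn%:Z - fp%:Z - 1 + d1%:Z + d2%:Z + i%:Z)%:~R) i)
        *: resY alpha (fm%:Z + fn%:Z - fp%:Z + d1%:Z + d2%:Z + i%:Z) u v
  else 0.

Definition bullet (M P N : nat) (u v : V) : V :=
  \sum_(r < T) bullet_h r M P N (proj r u) v.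

(* u diamond_{g,m}^n v for u in V^r *)
Definition diamond_h (r M N : nat) (u v : V) : V :=
  let fm := (M %/ T)%N in let bm := (M %% T)%N in
  let fn := (N %/ T)%N in let bn := (N %% T)%N in
  let d1 := delta bm r in let d2 := delta bn (T - r) in
  let alpha : K := (- 1 + fm%:Z + d1%:Z)%:~R + r%:R / T%:R in
  resY alpha (fm%:Z + fn%:Z + d1%:Z + d2%:Z + 1) u v.

Definition diamond (M N : nat) (u v : V) : V :=
  \sum_(r < T) diamond_h r M N (proj r u) v.

Definition vD (u : V) : V := vY A u (-2) (vvac A).

Inductive span (P : V -> Prop) : V -> Prop :=
| span0 : span P 0
| span_gen : forall x, P x -> span P x
| span_add : forall x y, span P x -> span P y -> span P (x + y)
| span_scale : forall (a : K) x, span P x -> span P (a *: x).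

Definition O1 (N M : nat) : V -> Prop :=
  span (fun w => (exists u v, w = diamond M N u v)
              \/ (exists u, w = vD u + ((M%:R - N%:R) / T%:R) *: u)).

Definition O2 (N M : nat) : V -> Prop :=
  span (fun w => exists (a b c u : V) (p1 p2 p3 : nat),
     w = bullet M p3 N u
           (bullet M p1 p3 (bullet p1 p2 p3 a b) c
            - bullet M p2 p3 a (bullet M p1 p2 b c))).

Definition O3 (N M : nat) : V -> Prop :=
  span (fun w => exists (p1 p2 : nat) (z y : V),
     span (fun z' => exists x o, O1 p2 p1 o /\ z' = bullet p1 p2 N x o) z
     /\ w = bullet M p1 N z y).

Definition Otilde (N M : nat) : V -> Prop :=
  span (fun w => O1 N M w \/ O2 N M w \/ O3 N M w).

Definition On (N : nat) : V -> Prop := O1 N N.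

End Twisted.

(* Main.v *)
Require Import Defs.
From HB Require Import structures.
From mathcomp Require Import all_boot all_order all_algebra.
From mathcomp Require Import ring zify.
Import Order.TTheory GRing.Theory Num.Theory.
Local Open Scope ring_scope.
Set Implicit Arguments. Unset Strict Implicit.
Local Notation spn := (@Defs.span _ _).

Section PSlemmas.
Variable K : fieldType.
Hypothesis HK : [pchar K] =i pred0.

Lemma natK_neq0 (n : nat) : (n.+1%:R : K) != 0.
Proof. by rewrite ((pcharf0P _).1 HK). Qed.

Lemma factK_neq0 (n : nat) : ((n`!)%:R : K) != 0.
Proof. by rewrite ((pcharf0P _).1 HK) -lt0n fact_gt0. Qed.

Lemma psmulC (f g : ps K) n : psmul f g n = psmul g f n.
Proof.
rewrite /psmul (reindex_inj rev_ord_inj) /=; apply: eq_bigr => i _.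
rewrite subSS subKn; first by rewrite mulrC.
by rewrite -ltnS.
Qed.

Lemma psmul_ext (f f' g g' : ps K) n :
  (forall i, f i = f' i) -> (forall i, g i = g' i) -> psmul f g n = psmul f' g' n.
Proof. by move=> Hf Hg; rewrite /psmul; apply: eq_bigr => i _; rewrite Hf Hg. Qed.

Lemma psmulZl (a : K) (f g : ps K) n :
  psmul (fun i => a * f i) g n = a * psmul f g n.
Proof. by rewrite /psmul mulr_sumr; apply: eq_bigr => i _; rewrite mulrA. Qed.

Lemma psmulZr (a : K) (f g : ps K) n :
  psmul f (fun i => a * g i) n = a * psmul f g n.
Proof. by rewrite psmulC psmulZl psmulC. Qed.

Lemma psmul1l (f : ps K) n : psmul (ps1 K) f n = f n.
Proof.
rewrite /psmul big_ord_recl /= /ps1 /= mul1r subn0 big1 ?addr0 // => i _.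
by rewrite mul0r.
Qed.

Definition shiftk (k : nat) (h : ps K) : ps K :=
  fun n => if (k <= n)%N then h (n - k)%N else 0.

Lemma psmul_shift (f h : ps K) k n :
  psmul f (shiftk k h) n = if (k <= n)%N then psmul f h (n - k)%N else 0.
Proof.
rewrite /psmul /shiftk; case: (leqP k n) => Hk.
  have Hle : ((n - k).+1 <= n.+1)%N by rewrite ltnS leq_subr.
  rewrite (big_ord_widen _ (fun i => f i * h (n - k - i)%N) Hle) [RHS]big_mkcond /=.
  apply: eq_bigr => i _; have Hi := ltn_ord i.
  case: (leqP k (n - i)) => H1; case: (ltnP i (n - k).+1) => H2.
  - by rewrite subnAC.
  - exfalso; lia.
  - exfalso; lia.
  - by rewrite mulr0.
rewrite big1 // => i _; have Hi := ltn_ord i.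
case: (leqP k (n - i)) => H1; last by rewrite mulr0.
exfalso; lia.
Qed.

Definition Dl (f : ps K) : ps K := fun n => n.+1%:R * f n.+1 + n%:R * f n.

Lemma Dl_mul (f g : ps K) n :
  Dl (psmul f g) n = psmul (Dl f) g n + psmul f (Dl g) n.
Proof.
rewrite /Dl /psmul.
have E1 : \sum_(i < n.+2) i%:R * f i * g (n.+1 - i)%N
        = \sum_(i < n.+1) i.+1%:R * f i.+1 * g (n - i)%N.
  by rewrite big_ord_recl /= !mul0r add0r; apply: eq_bigr => i _; rewrite subSS.
have E2 : \sum_(i < n.+2) (n.+1 - i)%:R * f i * g (n.+1 - i)%N
        = \sum_(i < n.+1) f i * ((n - i).+1%:R * g (n - i).+1).
  rewrite big_ord_recr /= subnn !mul0r addr0; apply: eq_bigr => i _.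
  have Hi : (i <= n)%N by rewrite -ltnS.
  by rewrite subSn // mulrCA mulrA.
have E3 : n.+1%:R * \sum_(i < n.+2) f i * g (n.+1 - i)%N
   = \sum_(i < n.+2) i%:R * f i * g (n.+1 - i)%N
     + \sum_(i < n.+2) (n.+1 - i)%:R * f i * g (n.+1 - i)%N.
  rewrite mulr_sumr -big_split; apply: eq_bigr => i _ /=.
  have Hi : (i <= n.+1)%N by rewrite -ltnS.
  have -> : (n.+1%:R : K) = i%:R + (n.+1 - i)%:R by rewrite -natrD subnKC.
  ring.
have E4 : n%:R * \sum_(i < n.+1) f i * g (n - i)%N
   = \sum_(i < n.+1) i%:R * f i * g (n - i)%N
     + \sum_(i < n.+1) f i * ((n - i)%:R * g (n - i)%N).
  rewrite mulr_sumr -big_split; apply: eq_bigr => i _ /=.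
  have Hi : (i <= n)%N by rewrite -ltnS.
  have -> : (n%:R : K) = i%:R + (n - i)%:R by rewrite -natrD subnKC.
  ring.
rewrite E3 E4 E1 E2.
have -> : \sum_(i < n.+1) (i.+1%:R * f i.+1 + i%:R * f i) * g (n - i)%N
  = \sum_(i < n.+1) i.+1%:R * f i.+1 * g (n - i)%N + \sum_(i < n.+1) i%:R * f i * g (n - i)%N.
  by rewrite -big_split; apply: eq_bigr => i _; rewrite mulrDl.
have -> : \sum_(i < n.+1) f i * ((n - i).+1%:R * g (n - i).+1 + (n - i)%:R * g (n - i)%N)
  = \sum_(i < n.+1) f i * ((n - i).+1%:R * g (n - i).+1) + \sum_(i < n.+1) f i * ((n - i)%:R * g (n - i)%N).
  by rewrite -big_split; apply: eq_bigr => i _; rewrite mulrDr.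
ring.
Qed.

Ltac fside := repeat (apply/andP; split); rewrite ?nat1r ?natK_neq0 ?factK_neq0 ?nat1r -?natrD ?((pcharf0P _).1 HK) //.

Lemma gbinom0 (a : K) : gbinom a 0 = 1.
Proof. by rewrite /gbinom big_ord0 fact0 divr1. Qed.

Lemma gbinomS (a : K) n : gbinom a n.+1 = gbinom a n * (a - n%:R) / n.+1%:R.
Proof.
rewrite /gbinom big_ord_recr /= factS natrM.
have H1 := natK_neq0 n; have H2 := factK_neq0 n.
field; fside.
Qed.

Lemma Dl_binser (a : K) n : Dl (binser a) n = a * binser a n.
Proof.
rewrite /Dl /binser gbinomS.
have H1 := natK_neq0 n.
field; fside.
Qed.

Lemma Dl_uniq (f : ps K) (l : K) :
  (forall n, Dl f n = l * f n) -> f 0%N = 1 -> forall n, f n = gbinom l n.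
Proof.
move=> HD H0; elim=> [|n IH]; first by rewrite H0 gbinom0.
have := HD n; rewrite /Dl IH gbinomS => E.
have H1 := natK_neq0 n.
apply: (mulfI H1); rewrite mulrCA mulfV // mulr1.
apply: (addIr (n%:R * gbinom l n)); rewrite E; ring.
Qed.

Lemma Dl_ps1 n : Dl (ps1 K) n = 0.
Proof. by rewrite /Dl /ps1 /=; case: n => [|n]; rewrite /= ?mulr0 ?mul0r ?addr0. Qed.

Definition Lser : ps K := shiftk 1 (logy K).

Lemma Dl_Lser n : Dl Lser n = (n == 0%N)%:R.
Proof.
rewrite /Dl /Lser /shiftk /logy /=; case: n => [|n] /=.
  by rewrite subnn expr0 mul1r mul0r addr0 divr1.
rewrite !subn1 /= exprS.
have H1 := natK_neq0 n.+1; have H2 := natK_neq0 n.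
field; fside.
Qed.

Lemma psexpS (f : ps K) k : psexp f k.+1 = psmul f (psexp f k).
Proof. by []. Qed.

Lemma psexpL k n : psexp Lser k n = shiftk k (psexp (logy K) k) n.
Proof.
elim: k n => [|k IH] n.
  by rewrite /shiftk /= subn0.
rewrite psexpS (@psmul_ext _ Lser _ (shiftk k (psexp (logy K) k))) //.
rewrite psmulC psmul_shift /shiftk.
case: (leqP 1 n) => H1; last first.
  by case: n H1.
rewrite psmulC psmul_shift.
case: (leqP k (n - 1)) => H2; case: (leqP k.+1 n) => H3 //; try (exfalso; lia).
by rewrite psexpS; congr psmul; lia.
Qed.

Lemma psexpL_small k n : (n < k)%N -> psexp Lser k n = 0.
Proof. by move=> H; rewrite psexpL /shiftk leqNgt H. Qed.

Lemma Dl_psexpL k n : Dl (psexp Lser k) n = k%:R * psexp Lser k.-1 n.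
Proof.
elim: k n => [|k IH] n.
  by rewrite Dl_ps1 mul0r.
rewrite psexpS Dl_mul (@psmul_ext _ (ps1 K) _ (psexp Lser k)); last by [].
  2: by move=> i; rewrite Dl_Lser.
rewrite psmul1l (@psmul_ext _ Lser _ (fun i => k%:R * psexp Lser k.-1 i)) //.
rewrite psmulZr.
case: k IH => [|k] IH /=; first by rewrite mul0r addr0 mul1r.
by rewrite -psexpS -addn1 natrD; ring.
Qed.

Definition coefG (c : K) (k : nat) : K := (- c) ^+ k / (k`!)%:R.

Definition Gs (c : K) : ps K := fun n => \sum_(k < n.+1) coefG c k * psexp Lser k n.

Lemma Gs_big c n B : (n < B)%N -> \sum_(k < B) coefG c k * psexp Lser k n = Gs c n.
Proof.
move=> HB; rewrite /Gs (big_ord_widen _ (fun k => coefG c k * psexp Lser k n) HB).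
rewrite [RHS]big_mkcond /=; apply: eq_bigr => k _.
case: ltnP => // Hk; by rewrite psexpL_small ?mulr0.
Qed.

Lemma Dl_Gs c n : Dl (Gs c) n = - c * Gs c n.
Proof.
rewrite {1}/Dl -(@Gs_big c n n.+2) // {1}/Gs.
rewrite !mulr_sumr -big_split /=.
rewrite (eq_bigr (fun k : 'I_n.+2 => coefG c k * (k%:R * psexp Lser k.-1 n))); last first.
  move=> k _; rewrite -Dl_psexpL /Dl; ring.
rewrite big_ord_recl /= mul0r mulr0 add0r -mulr_sumr (@Gs_big c n n.+2) // -(@Gs_big c n n.+1) // mulr_sumr.
apply: eq_bigr => k _ /=.
rewrite /coefG factS natrM exprS add0n.
have -> : bump 0 k = k.+1 by [].
have H1 := natK_neq0 k; have H2 := factK_neq0 k.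
field; fside.
Qed.

Lemma Gs0 c : Gs c 0%N = 1.
Proof. by rewrite /Gs big_ord1 /coefG /= expr0 fact0 divr1 mul1r. Qed.

Lemma scalar_identity (a c : K) (e : nat) :
  \sum_(k < e.+1) psmul (binser a) (psexp (logy K) k) (e - k)%N * coefG c k
  = gbinom (a - c) e.
Proof.
have HH : forall n, psmul (binser a) (Gs c) n = gbinom (a - c) n.
  apply: Dl_uniq; last by rewrite /psmul big_ord1 /binser gbinom0 Gs0 mulr1.
  move=> n; rewrite Dl_mul.
  rewrite (@psmul_ext _ (fun i => a * binser a i) _ (Gs c)); last by []; last first.
    by move=> i; rewrite Dl_binser.
  rewrite psmulZl (@psmul_ext (binser a) (binser a) (Dl (Gs c)) (fun i => - c * Gs c i)) //; last first.
    by move=> i; rewrite Dl_Gs.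
  rewrite psmulZr; ring.
rewrite -HH [RHS]/psmul.
rewrite [RHS](eq_bigr (fun i : 'I_e.+1 => \sum_(k < e.+1) binser a i * (coefG c k * psexp Lser k (e - i)%N))); last first.
  move=> i _; rewrite -(@Gs_big c (e - i) e.+1) ?mulr_sumr //.
  by rewrite ltnS leq_subr.
rewrite exchange_big /=; apply: eq_bigr => k _.
have Hk : (k <= e)%N by rewrite -ltnS.
have := psmul_shift (binser a) (psexp (logy K) k) k e; rewrite Hk /psmul => <-.
rewrite mulr_suml; apply: eq_bigr => i _.
by rewrite psexpL; ring.
Qed.

End PSlemmas.

Section SpanLemmas.
Variables (K : fieldType) (V : lmodType K).
Implicit Types (P Q : V -> Prop).

Lemma span_sub P x y : spn P x -> spn P y -> spn P (x - y).
Proof.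
move=> Hx Hy; apply: Defs.span_add => //.
by rewrite -scaleN1r; apply: Defs.span_scale.
Qed.

Lemma span_opp P x : spn P x -> spn P (- x).
Proof. by move=> Hx; rewrite -scaleN1r; apply: Defs.span_scale. Qed.

Lemma span_sum P (I : finType) (F : I -> V) :
  (forall i, spn P (F i)) -> spn P (\sum_i F i).
Proof.
move=> H; apply: (big_ind (spn P)) => //; [exact: Defs.span0 | exact: Defs.span_add].
Qed.

Lemma span_mono P Q : (forall x, P x -> Q x) -> forall x, spn P x -> spn Q x.
Proof.
move=> H x; elim=> {x} [|x Px|x y _ Hx _ Hy|a x _ Hx].
- exact: Defs.span0.
- by apply: Defs.span_gen; apply: H.
- exact: Defs.span_add.
- exact: Defs.span_scale.
Qed.

Lemma span_idem P x : spn (spn P) x -> spn P x.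
Proof.
elim=> {x} [|x Px|x y _ Hx _ Hy|a x _ Hx] //.
- exact: Defs.span0.
- exact: Defs.span_add.
- exact: Defs.span_scale.
Qed.

End SpanLemmas.

Section VA.
Variables (K : fieldType) (V : lmodType K) (A : vertex_algebra V).
Hypothesis HK : [pchar K] =i pred0.

Local Notation vY := (vY A).
Local Notation vac := (vvac A).

Lemma vY0l k v : vY 0 k v = 0.
Proof.
have := vY_linl A k v 1 0 0; rewrite !scale1r !addr0 => H.
by apply: (@addrI _ (vY 0 k v)); rewrite addr0 -H.
Qed.

Lemma vY0r u k : vY u k 0 = 0.
Proof.
have := vY_linr A u k 1 0 0; rewrite !scale1r !addr0 => H.
by apply: (@addrI _ (vY u k 0)); rewrite addr0 -H.
Qed.

Lemma vYDl x y k v : vY (x + y) k v = vY x k v + vY y k v.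
Proof. by have := vY_linl A k v 1 x y; rewrite !scale1r. Qed.

Lemma vYZl a x k v : vY (a *: x) k v = a *: vY x k v.
Proof. by have := vY_linl A k v a x 0; rewrite !addr0 vY0l addr0. Qed.

Lemma vYDr u k x y : vY u k (x + y) = vY u k x + vY u k y.
Proof. by have := vY_linr A u k 1 x y; rewrite !scale1r. Qed.

Lemma vYZr u k a x : vY u k (a *: x) = a *: vY u k x.
Proof. by have := vY_linr A u k a x 0; rewrite !addr0 vY0r addr0. Qed.

Lemma gbinom1 (a : K) : gbinom a 1 = a.
Proof. by rewrite (gbinomS HK) gbinom0 subr0 mul1r divr1. Qed.

Lemma Dmode u p v : vY (vD A u) p v = - (p%:~R) *: vY u (p - 1) v.
Proof.
have J := vY_jacobi A u vac v p 0 (-2).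
have E1 : absz ((vtrunc A u vac)%:Z - (-2 : int)) = (vtrunc A u vac).+2 by lia.
rewrite E1 big_ord_recl big_ord_recl /= in J.
rewrite big1 in J; last first.
  move=> i _.
  have -> : (-2 + (bump 0 (bump 0 i))%:Z) = i%:Z.
    rewrite /bump /=; lia.
  by rewrite vY_creation0 // vY0l scaler0.
rewrite big1 in J; last first.
  move=> i _; rewrite vY_vacuum.
  have -> : (0 + i%:Z == -1) = false by apply/eqP; lia.
  by rewrite vY0r scaler0.
rewrite [X in _ - _ *: X]big1 in J; last first.
  move=> i _; rewrite vY_vacuum.
  have -> : (0 + -2 - i%:Z == -1) = false by apply/eqP; lia.
  by rewrite scaler0.
have B0 : bump 0 0 = 1%N by [].
rewrite B0 subr0 !addr0 gbinom1 in J.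
have E5 : (p - (1%N)%:Z) = p - 1 by [].
have E4 : (-2 + (1%N)%:Z) = -1 by [].
rewrite E4 E5 vY_creation1 gbinom0 scale1r scaler0 subr0 in J.
apply/eqP; rewrite scaleNr -subr_eq0 opprK; apply/eqP.
by rewrite /vD.
Qed.

Lemma vY_neg_vac k u : vY u (- (k.+1)%:Z) vac = ((k`!)%:R)^-1 *: iter k (vD A) u.
Proof.
elim: k u => [|k IH] u.
  by rewrite /= fact0 invr1 scale1r; apply: vY_creation1.
have D := Dmode u (- (k.+1)%:Z) vac.
rewrite IH in D.
have E : - (k.+1)%:Z - 1 = - (k.+2)%:Z by lia.
rewrite E mulrNz opprK in D.
have E2 : ((k.+1)%:Z%:~R : K) = k.+1%:R by [].
rewrite E2 in D.
have H1 := natK_neq0 HK k; have H2 := factK_neq0 HK k.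
by rewrite iterSr factS natrM invfM -scalerA D scalerA mulVf ?scale1r.
Qed.

Definition Lgen (c : K) : V -> Prop := fun w => exists u, w = vD A u + c *: u.

Lemma iterD_mod c k x : spn (Lgen c) (iter k (vD A) x - (- c) ^+ k *: x).
Proof.
elim: k => [|k IH].
  by rewrite /= expr0 scale1r subrr; apply: Defs.span0.
set y := iter k (vD A) x.
have -> : iter k.+1 (vD A) x - (- c) ^+ k.+1 *: x
        = (vD A y + c *: y) + (- c) *: (y - (- c) ^+ k *: x).
  rewrite scalerBr scalerA -exprS scaleNr addrA /=.
  by rewrite addrK.
apply: Defs.span_add; first by apply: Defs.span_gen; exists y.
exact: Defs.span_scale.
Qed.

Lemma resc_neg (a : K) e k : (k <= e)%N ->
  resc a (Posz e.+1) (- (k.+1)%:Z) = psmul (binser a) (psexp (logy K) k) (e - k)%N.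
Proof.
move=> Hk; rewrite /resc.
have -> : (0 <= (Posz e.+1) + - (k.+1)%:Z) = true by apply/idP; lia.
have -> : - - (k.+1)%:Z - 1 = Posz k by lia.
have -> : absz (Posz e.+1 + - (k.+1)%:Z) = (e - k)%N by lia.
by [].
Qed.

Lemma resY_vac (a : K) e x :
  resY A a (Posz e.+1) x vac
  = \sum_(k < e.+1) psmul (binser a) (psexp (logy K) k) (e - k)%N *: vY x (- (k.+1)%:Z) vac.
Proof.
rewrite /resY /= addnC big_split_ord /=.
rewrite [X in _ + X]big1 ?addr0; last first.
  move=> i _; rewrite vY_creation0 ?scaler0 //; lia.
rewrite (reindex_inj rev_ord_inj) /=; apply: eq_bigr => k _.
have Hk : (k <= e)%N by rewrite -ltnS.
have -> : ((e.+1 - k.+1)%N%:Z - (e.+1)%:Z) = - (k.+1)%:Z by lia.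
by rewrite resc_neg.
Qed.

Lemma resY_vac_mod (a c : K) e x :
  spn (Lgen c) (resY A a (Posz e.+1) x vac - gbinom (a - c) e *: x).
Proof.
rewrite resY_vac -(scalar_identity HK a c e) scaler_suml -sumrB.
apply: span_sum => k.
rewrite vY_neg_vac scalerA.
set r := psmul _ _ _.
have -> : (r * coefG c k) = (r / (k`!)%:R) * (- c) ^+ k.
  by rewrite /coefG; ring.
rewrite -[X in _ - X]scalerA -scalerBr; apply: Defs.span_scale; exact: iterD_mod.
Qed.

Lemma resY_bound a E u v B : (vtrunc A u v + absz E <= B)%N ->
  resY A a E u v = \sum_(i < B) resc a E (i%:Z - (absz E)%:Z) *: vY u (i%:Z - (absz E)%:Z) v.
Proof.
move=> HB; rewrite /resY.
rewrite (big_ord_widen B (fun i : nat => resc a E (i%:Z - (absz E)%:Z) *: vY u (i%:Z - (absz E)%:Z) v) HB).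
rewrite big_mkcond /=; apply: eq_bigr => i _.
case: ltnP => // Hi.
by rewrite vY_trunc ?scaler0 //; lia.
Qed.

Lemma resY_linl a E b x y v :
  resY A a E (b *: x + y) v = b *: resY A a E x v + resY A a E y v.
Proof.
set B := (vtrunc A (b *: x + y) v + vtrunc A x v + vtrunc A y v + absz E)%N.
rewrite !(@resY_bound _ _ _ _ B); try (rewrite /B; lia).
rewrite scaler_sumr -big_split; apply: eq_bigr => i _ /=.
by rewrite vY_linl scalerDr !scalerA mulrC.
Qed.

Lemma resY_linr a E u b x y :
  resY A a E u (b *: x + y) = b *: resY A a E u x + resY A a E u y.
Proof.
set B := (vtrunc A u (b *: x + y) + vtrunc A u x + vtrunc A u y + absz E)%N.
rewrite !(@resY_bound _ _ _ _ B); try (rewrite /B; lia).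
rewrite scaler_sumr -big_split; apply: eq_bigr => i _ /=.
by rewrite vY_linr scalerDr !scalerA mulrC.
Qed.

End VA.

Unset Implicit Arguments.
Local Close Scope ring_scope.
Import GRing.Theory.

Lemma condA T bm bn r : (0 < T)%N -> (bm < T)%N -> (bn < T)%N -> (r < T)%N ->
  ((bm + T - bn) %% T = r %% T)%N ->
  ((r <= bm) * T + r + bn = bm + T)%N /\ ((r <= bm) + (T - r <= bn) = 1)%N.
Proof.
move=> HT Hbm Hbn Hr; rewrite (modn_small Hr).
case: (leqP bn bm) => H.
  rewrite -addnBAC // modnDr modn_small; last by lia.
  move=> E; have H1 : (r <= bm)%N by lia.
  have H2 : (T - r <= bn) = false by apply/negbTE; rewrite -ltnNge; lia.
  rewrite H1 H2 /=; lia.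
rewrite modn_small; last by lia.
move=> E; have H1 : (r <= bm) = false by apply/negbTE; rewrite -ltnNge; lia.
have H2 : (T - r <= bn)%N by lia.
rewrite H1 H2 /=; lia.
Qed.

Lemma condB T bm bn r q1 q2 : (0 < T)%N -> (bm < T)%N -> (bn < T)%N -> (r < T)%N ->
  (q1 * T + r + bn = q2 * T + bm)%N -> ((bm + T - bn) %% T = r %% T)%N.
Proof.
move=> HT Hbm Hbn Hr E.
have [H|H] : (r + bn = bm \/ r + bn = bm + T)%N.
  case: (ltngtP q1 q2) => Hq.
  - have : (q1.+1 * T <= q2 * T)%N by rewrite leq_mul2r Hq orbT.
    case: (ltngtP q2 q1.+1) => Hq2.
    + lia.
    + have : (q1.+2 * T <= q2 * T)%N by rewrite leq_mul2r Hq2 orbT.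
      rewrite !mulSn; lia.
    + subst q2; rewrite mulSn in E; lia.
  - have : (q2.+1 * T <= q1 * T)%N by rewrite leq_mul2r Hq orbT.
    rewrite mulSn; lia.
  - subst q2; lia.
  have -> : (bm + T - bn = r + T)%N by lia.
  by rewrite modnDr.
have -> : (bm + T - bn = r)%N by lia.
by [].
Qed.

Lemma arithA1 qm bm qn bn T d r : (d * T + r + bn = bm + T)%N ->
  ((qm + d) * T + r + (qn * T + bn) = (qm * T + bm) + (qn + 1) * T)%N.
Proof. lia. Qed.

Lemma arithB1 qm bm qn bn T d r j :
  ((qm + d) * T + r + (qn * T + bn) = (qm * T + bm) + (j + 1) * T)%N ->
  ((d + qn) * T + r + bn = (j + 1) * T + bm)%N.
Proof. lia. Qed.


Local Open Scope ring_scope.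
Section ArithK.
Variable K : fieldType.
Hypothesis HK : [pchar K] =i pred0.

Lemma natK_inj m n : (m%:R : K) = n%:R -> m = n.
Proof.
move=> E; case: (leqP m n) => H.
  have : ((n - m)%N%:R : K) = 0 by rewrite natrB // E subrr.
  move/eqP; rewrite ((pcharf0P _).1 HK) => /eqP; lia.
have : ((m - n)%N%:R : K) = 0 by rewrite natrB ?E ?subrr //; lia.
move/eqP; rewrite ((pcharf0P _).1 HK) => /eqP; lia.
Qed.

Lemma beta_nat (T fm d r M N x : nat) : (T%:R : K) != 0 ->
  ((-1 + fm%:Z + d%:Z)%:~R + r%:R / T%:R) - (M%:R - N%:R) / T%:R = (x%:R : K) <->
  ((fm + d) * T + r + N = M + (x + 1) * T)%N.
Proof.
move=> HT.
have E1 : ((-1 + fm%:Z + d%:Z)%:~R : K) = fm%:R + d%:R - 1.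
  by rewrite !intrD intrN -!pmulrn; ring.
rewrite E1; split => H.
  apply: natK_inj; rewrite !(natrD, natrM).
  apply/eqP; rewrite -subr_eq0.
  have -> : (fm%:R + d%:R) * T%:R + r%:R + N%:R - (M%:R + (x%:R + 1) * T%:R)
     = T%:R * ((fm%:R + d%:R - 1 + r%:R / T%:R - (M%:R - N%:R) / T%:R) - x%:R) :> K.
    by field.
  by rewrite H subrr mulr0.
have H' := congr1 (fun n => n%:R : K) H; rewrite /= !(natrD, natrM) in H'.
apply/eqP; rewrite -subr_eq0.
have -> : (fm%:R + d%:R - 1 + r%:R / T%:R - (M%:R - N%:R) / T%:R) - x%:R
   = ((fm%:R + d%:R) * T%:R + r%:R + N%:R - (M%:R + (x%:R + 1) * T%:R)) / T%:R :> K.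
  by field.
by rewrite H' subrr mul0r.
Qed.

Lemma gbinom_neq0 (b : K) k : (forall j : nat, b != j%:R) -> gbinom b k != 0.
Proof.
move=> H; rewrite /gbinom mulf_neq0 ?invr_eq0 ?factK_neq0 //.
apply: (big_ind (fun y : K => y != 0)) => //; first by rewrite oner_eq0.
  by move=> y z Hy Hz; rewrite mulf_neq0.
by move=> j _; rewrite subr_eq0 H.
Qed.

End ArithK.

Set Implicit Arguments.

Section Lin.
Variables (K : fieldType) (V : lmodType K).
Definition islin (f : V -> V) := forall (a : K) x y, f (a *: x + y) = a *: f x + f y.

Variable f : V -> V.
Hypothesis Hf : islin f.

Lemma lin0 : f 0 = 0.
Proof.
have := Hf 1 0 0; rewrite scale1r !addr0 scale1r => H.
by apply: (@addrI _ (f 0)); rewrite addr0 -H.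
Qed.

Lemma linD x y : f (x + y) = f x + f y.
Proof. by have := Hf 1 x y; rewrite !scale1r. Qed.

Lemma linZ a x : f (a *: x) = a *: f x.
Proof. by have := Hf a x 0; rewrite !addr0 lin0 addr0. Qed.

Lemma linN x : f (- x) = - f x.
Proof. by rewrite -scaleN1r linZ scaleN1r. Qed.

Lemma linB x y : f (x - y) = f x - f y.
Proof. by rewrite linD linN. Qed.

Lemma lin_sum (I : Type) (r : seq I) (P : pred I) (F : I -> V) :
  f (\sum_(i <- r | P i) F i) = \sum_(i <- r | P i) f (F i).
Proof. exact: (big_morph f linD lin0). Qed.

End Lin.

Lemma islin_iter (K : fieldType) (V : lmodType K) (f : V -> V) n :
  islin f -> islin (iter n f).
Proof.
move=> Hf a x y; elim: n => [|n IH] //=.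
by rewrite IH Hf.
Qed.

Lemma root_sum (K : fieldType) (z : K) n :
  z ^+ n = 1 -> z != 1 -> \sum_(j < n) z ^+ j = 0.
Proof.
move=> H1 H2; have := subrX1 z n; rewrite H1 subrr => /esym/eqP.
by rewrite mulf_eq0 subr_eq0 (negbTE H2) /= => /eqP.
Qed.

Lemma sum_mod (K : fieldType) (V : lmodType K) n (cf bs : 'I_n -> K) (F : 'I_n -> V) x (P : V -> Prop) :
  (forall i, spn P (F i - bs i *: x)) -> \sum_i cf i * bs i = 1 ->
  spn P (\sum_i cf i *: F i - x).
Proof.
move=> HF Hs; have -> : \sum_i cf i *: F i - x = \sum_i cf i *: (F i - bs i *: x).
  rewrite -{1}(scale1r x) -Hs scaler_suml -sumrB; apply: eq_bigr => i _.
  by rewrite scalerBr scalerA.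
apply: span_sum => i; apply: Defs.span_scale; exact: HF.
Qed.

Section Twisted.
Variables (K : fieldType) (V : lmodType K) (A : vertex_algebra V).
Variables (T : nat) (om : K) (g : V -> V).
Hypothesis HK : [pchar K] =i pred0.
Hypothesis Hom : T.-primitive_root om.
Hypothesis Hg_lin : forall (a : K) (x y : V), g (a *: x + y) = a *: g x + g y.
Hypothesis Hg_vac : g (vvac A) = vvac A.
Hypothesis Hg_ord : forall v : V, iter T g v = v.

Local Notation vac := (vvac A).
Local Notation proj := (proj T om g).

Lemma T_gt0 : (0 < T)%N.
Proof. exact: prim_order_gt0 Hom. Qed.

Lemma omT : om ^+ T = 1.
Proof. exact: prim_expr_order Hom. Qed.

Lemma om_neq0 : om != 0.
Proof.
apply/eqP => E; have := omT; rewrite E expr0n.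
by have := T_gt0; case: T => // n _ /= /eqP; rewrite eq_sym oner_eq0.
Qed.

Lemma TK_neq0 : (T%:R : K) != 0.
Proof. by rewrite ((pcharf0P _).1 HK) -lt0n T_gt0. Qed.

Lemma omX_neq0 k : om ^+ k != 0.
Proof. by rewrite expf_neq0 // om_neq0. Qed.

Lemma islin_g : islin g.
Proof. exact: Hg_lin. Qed.

Lemma islin_proj r : islin (proj r).
Proof.
move=> a x y; rewrite /Defs.proj.
rewrite scalerA mulrC -scalerA -scalerDr; congr (_ *: _).
rewrite scaler_sumr -big_split; apply: eq_bigr => j _ /=.
by rewrite (islin_iter j islin_g) scalerDr !scalerA mulrC.
Qed.

Lemma iter_g_vac j : iter j g vac = vac.
Proof. by elim: j => //= j ->. Qed.

Lemma sum_inv_om r :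
  \sum_(j < T) (om ^+ (r * j))^-1 = if (r %% T == 0)%N then T%:R else 0.
Proof.
have -> : \sum_(j < T) (om ^+ (r * j))^-1 = \sum_(j < T) ((om ^+ r)^-1) ^+ j.
  by apply: eq_bigr => j _; rewrite exprM exprVn.
case: ifP => Hr.
  have -> : om ^+ r = 1.
    by apply/eqP; rewrite -(prim_order_dvd Hom); apply/dvdnP; exists (r %/ T)%N;
       rewrite {1}(divn_eq r T) (eqP Hr) addn0.
  by rewrite invr1 (eq_bigr (fun _ => 1)) ?sumr_const ?card_ord // => j _; rewrite expr1n.
apply: root_sum.
  by rewrite exprVn -exprM mulnC exprM omT expr1n invr1.
rewrite invr_eq1 -(prim_order_dvd Hom).
by apply/negP => /dvdnP [q Hq]; move: Hr; rewrite Hq modnMl.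
Qed.

Lemma proj_vac r : (r < T)%N -> proj r vac = (if r == 0%N then 1 else 0) *: vac.
Proof.
move=> Hr; rewrite /Defs.proj.
rewrite (eq_bigr (fun j : 'I_T => (om ^+ (r * j))^-1 *: vac)); last first.
  by move=> j _; rewrite iter_g_vac.
rewrite -scaler_suml sum_inv_om scalerA modn_small //.
case: (r =P 0%N) => _.
  by rewrite mulVf // TK_neq0.
by rewrite mulr0.
Qed.

Lemma proj_sum w : \sum_(r < T) proj r w = w.
Proof.
rewrite /Defs.proj -scaler_sumr exchange_big /=.
rewrite (eq_bigr (fun j : 'I_T => (\sum_(r < T) (om ^+ (j * r))^-1) *: iter j g w)); last first.
  by move=> j _; rewrite scaler_suml; apply: eq_bigr => r _; rewrite mulnC.
rewrite (eq_bigr (fun j : 'I_T => (if (nat_of_ord j == 0%N) then T%:R else 0) *: iter j g w)); last first.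
  by move=> j _; rewrite sum_inv_om modn_small.
have HT := T_gt0.
rewrite -(big_mkord xpredT (fun j => (if (j == 0%N) then T%:R else 0) *: iter j g w)).
rewrite (big_ltn HT) /= big_nat big1 ?addr0; last first.
  by move=> j /andP [Hj _]; rewrite (gtn_eqF Hj) scale0r.
by rewrite scalerA mulVf ?TK_neq0 // scale1r.
Qed.

Lemma proj_g r w : g (proj r w) = om ^+ r *: proj r w.
Proof.
have HT := T_gt0.
have [T' HT'] : exists T', T = T'.+1 by exists T.-1; rewrite prednK.
rewrite /Defs.proj (linZ islin_g) (lin_sum islin_g) scalerA mulrC -scalerA.
congr (_ *: _).
rewrite (eq_bigr (fun j : 'I_T => (om ^+ (r * j))^-1 *: iter j.+1 g w)); last first.
  by move=> j _; rewrite (linZ islin_g).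
rewrite scaler_sumr.
rewrite -(big_mkord xpredT (fun j => (om ^+ (r * j))^-1 *: iter j.+1 g w)).
rewrite -(big_mkord xpredT (fun j => om ^+ r *: ((om ^+ (r * j))^-1 *: iter j g w))).
rewrite HT' big_nat_recr //= big_nat_recl //=.
rewrite [in RHS]addrC; congr (_ + _).
  apply: eq_big_nat => j _.
  rewrite scalerA; congr (_ *: _).
  rewrite mulnS exprD invfM mulrA mulfV ?omX_neq0 // mul1r.
  done.
have -> : g (iter T' g w) = w by rewrite -[X in _ = X]Hg_ord HT'.
rewrite muln0 expr0 invr1 scale1r.
have E : om ^+ (r * T') * om ^+ r = 1.
  by rewrite -exprD addnC -mulnS -HT' mulnC exprM omT expr1n.
apply/eqP; rewrite -subr_eq0 -scalerBl; apply/eqP.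
suff -> : (om ^+ (r * T'))^-1 - om ^+ r = 0 by rewrite scale0r.
apply/eqP; rewrite subr_eq0; apply/eqP.
apply: (@mulfI _ (om ^+ (r * T'))); first exact: omX_neq0.
by rewrite mulfV ?omX_neq0 // E.
Qed.

Lemma iter_proj j r w : iter j g (proj r w) = om ^+ (r * j) *: proj r w.
Proof.
elim: j => [|j IH] /=; first by rewrite muln0 expr0 scale1r.
by rewrite IH (linZ islin_g) proj_g scalerA -exprD mulnS addnC.
Qed.

Lemma proj_proj r r' w : (r < T)%N -> (r' < T)%N ->
  proj r' (proj r w) = if r' == r then proj r w else 0.
Proof.
move=> Hr Hr'.
rewrite {1}/Defs.proj.
rewrite (eq_bigr (fun j : 'I_T => ((om ^+ r / om ^+ r') ^+ j) *: proj r w)); last first.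
  move=> j _; rewrite iter_proj scalerA; congr (_ *: _).
  by rewrite exprMn exprVn -!exprM mulrC.
rewrite -scaler_suml scalerA.
case: eqP => [->|Hne].
  rewrite mulfV ?omX_neq0 //.
  rewrite (eq_bigr (fun _ => 1)) ?sumr_const ?card_ord; last by move=> j _; rewrite expr1n.
  by rewrite mulVf ?TK_neq0 // scale1r.
rewrite root_sum ?mulr0 ?scale0r //.
  by rewrite exprMn exprVn -!exprM !(mulnC _ T) !exprM omT !expr1n invr1 mulr1.
apply/negP => /eqP E.
have : om ^+ r = om ^+ r'.
  by apply: (@divIf _ (om ^+ r')); rewrite ?omX_neq0 // E mulfV ?omX_neq0.
move/eqP; rewrite (eq_prim_root_expr Hom) !modn_small // => /eqP E2.
by apply: Hne.
Qed.

Lemma islin_bullet_h_l r M P N v : islin (fun u => bullet_h A T r M P N u v).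
Proof.
move=> a x y; rewrite /bullet_h /=; case: ifP => _; last by rewrite scaler0 addr0.
rewrite scaler_sumr -big_split; apply: eq_bigr => i _ /=.
by rewrite resY_linl scalerDr !scalerA mulrC.
Qed.

Lemma islin_bullet_h_r r M P N u : islin (bullet_h A T r M P N u).
Proof.
move=> a x y; rewrite /bullet_h /=; case: ifP => _; last by rewrite scaler0 addr0.
rewrite scaler_sumr -big_split; apply: eq_bigr => i _ /=.
by rewrite resY_linr scalerDr !scalerA mulrC.
Qed.

Lemma islin_diamond_h_l r M N v : islin (fun u => diamond_h A T r M N u v).
Proof. by move=> a x y; rewrite /diamond_h /= resY_linl. Qed.

Lemma islin_bullet_l M P N v : islin (fun u => bullet A T om g M P N u v).
Proof.
move=> a x y; rewrite /bullet scaler_sumr -big_split; apply: eq_bigr => r _ /=.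
by rewrite (islin_proj r) (islin_bullet_h_l r M P N v).
Qed.

Lemma islin_bullet_r M P N u : islin (bullet A T om g M P N u).
Proof.
move=> a x y; rewrite /bullet scaler_sumr -big_split; apply: eq_bigr => r _ /=.
by rewrite (islin_bullet_h_r r M P N).
Qed.

Lemma resY_vacl (a : K) e w : resY A a (Posz e.+1) vac w = gbinom a e *: w.
Proof.
rewrite /resY /=.
have He : (e < vtrunc A vac w + e.+1)%N by lia.
rewrite (bigD1 (Ordinal He)) //= big1 ?addr0; last first.
  move=> i Hi; rewrite vY_vacuum.
  have -> : ((nat_of_ord i)%:Z - (e.+1)%:Z == -1) = false.
    apply/eqP => E; move: Hi => /eqP; apply; apply: val_inj => /=; lia.
  by rewrite scaler0.
have -> : (e%:Z - (e.+1)%:Z) = - (1%N)%:Z by lia.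
rewrite vY_vacuum eqxx (resc_neg a (k:=0)) // subn0 /=.
by rewrite psmulC psmul1l.
Qed.

Lemma gbinom_nat n k : gbinom (n%:R : K) k = ('C(n, k))%:R.
Proof.
elim: k => [|k IH]; first by rewrite gbinom0 bin0.
rewrite (gbinomS HK) IH.
have H1 := natK_neq0 HK k.
apply: (@mulIf _ (k.+1%:R)) => //.
rewrite mulfVK // -natrM mulnC mul_bin_left.
case: (leqP k n) => Hk.
  by rewrite natrM natrB // mulrC.
by rewrite bin_small // muln0 mul0r.
Qed.

Lemma bullet_h0_vac M N w : bullet_h A T 0 M N N vac w = w.
Proof.
have HT := T_gt0.
rewrite /bullet_h /= addKn modnn mod0n eqxx.
have Hd1 : delta (M %% T) 0 = 1%N by rewrite /delta leq0n.
have Hd2 : delta (N %% T) (T - 0) = 0%N by rewrite /delta subn0 leqNgt ltn_pmod.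
rewrite Hd1 Hd2 mul0r addr0.
have -> : (-1 + (M %/ T)%N%:Z + (1%N)%:Z) = (M %/ T)%N%:Z by lia.
rewrite (eq_bigr (fun i : 'I_(N %/ T).+1 => (if nat_of_ord i == 0%N then 1 else 0) *: w)); last first.
  move=> i _.
  rewrite [X in resY _ _ X _ _](_ : _ = Posz (M %/ T + i).+1); last by lia.
  rewrite addr0 resY_vacl (gbinom_nat (M %/ T)) scalerA.
  case: (nat_of_ord i =P 0%N) => [->|Hi].
    by rewrite addn0 binn expr0 gbinom0 !mul1r.
  by rewrite bin_small ?mulr0 //; lia.
rewrite big_ord_recl /= big1 ?addr0 ?scale1r // => i _.
by rewrite scale0r.
Qed.

Lemma bullet_vac M N w : bullet A T om g M N N vac w = w.
Proof.
have HT := T_gt0.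
rewrite /bullet (bigD1 (Ordinal HT)) //= big1 ?addr0; last first.
  move=> r Hr; rewrite proj_vac //.
  have -> : (nat_of_ord r == 0%N) = false.
    by apply/eqP => E; move: Hr => /eqP; apply; apply: val_inj.
  by rewrite (linZ (islin_bullet_h_l _ _ _ _ _)) scale0r.
by rewrite proj_vac // eqxx scale1r bullet_h0_vac.
Qed.

Definition cMN (M N : nat) : K := (M%:R - N%:R) / T%:R.

Lemma bullet_h_vac_cond r M N x : (r < T)%N ->
  ((M %% T + T - N %% T) %% T == r %% T)%N ->
  spn (Lgen A (cMN M N)) (bullet_h A T r M M N x vac - x).
Proof.
move=> Hr Hc; have HT := T_gt0.
rewrite /bullet_h /= Hc.
have [HA1 HA2] := condA _ _ _ _ HT (ltn_pmod M HT) (ltn_pmod N HT) Hr (eqP Hc).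
have Hb : ((-1 + (M %/ T)%N%:Z + (delta (M %% T) r)%:Z)%:~R + r%:R / T%:R) - cMN M N
          = (N %/ T)%:R.
  rewrite /cMN; apply: (proj2 (@beta_nat _ HK _ (M %/ T) (delta (M %% T) r) r M N (N %/ T) TK_neq0)).
  have := arithA1 (M %/ T) (M %% T) (N %/ T) (N %% T) T _ r HA1; by rewrite -!divn_eq.
apply: (sum_mod (bs := fun i : 'I_(M %/ T).+1 =>
   gbinom (((-1 + (M %/ T)%N%:Z + (delta (M %% T) r)%:Z)%:~R + r%:R / T%:R) - cMN M N)
          (N %/ T + i))).
  move=> i.
  rewrite [X in resY _ _ X _ _](_ : _ = Posz (N %/ T + i).+1); last by rewrite /delta; lia.
  exact: resY_vac_mod.
rewrite Hb big_ord_recl /= big1 ?addr0.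
  by rewrite expr0 gbinom0 gbinom_nat addn0 binn !mul1r.
by move=> i _; rewrite gbinom_nat bin_small ?mulr0 // /bump leq0n add1n addnS ltnS leq_addr.
Qed.

Lemma diamond_h_vac_ncond r M N x : (r < T)%N ->
  ~~ ((M %% T + T - N %% T) %% T == r %% T)%N ->
  exists lam, lam != 0 /\ spn (Lgen A (cMN M N)) (diamond_h A T r M N x vac - lam *: x).
Proof.
move=> Hr Hc; have HT := T_gt0.
rewrite /diamond_h /=.
eexists; split; last first.
  rewrite [X in resY _ _ X _ _](_ : _ = Posz ((M %/ T) + (N %/ T) + delta (M %% T) r + delta (N %% T) (T - r))%N.+1); last by lia.
  exact: resY_vac_mod.
apply: (@gbinom_neq0 _ HK) => j; apply/eqP => Hj.
have := (proj1 (@beta_nat _ HK _ (M %/ T) (delta (M %% T) r) r M N j TK_neq0)) Hj.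
move=> E.
have E2 : ((delta (M %% T) r + N %/ T) * T + r + N %% T = (j + 1) * T + M %% T)%N.
  by apply: (arithB1 (M %/ T) (M %% T) (N %/ T) (N %% T)); rewrite -!divn_eq.
have := condB _ _ _ _ _ _ HT (ltn_pmod M HT) (ltn_pmod N HT) Hr E2.
by move=> E3; move: Hc; rewrite E3 eqxx.
Qed.

Lemma Lgen_O1 N M x : spn (Lgen A (cMN M N)) x -> O1 A T om g N M x.
Proof.
apply: span_mono => y [u ->]; right; exists u; done.
Qed.

Lemma proj_O1 r M N w : (r < T)%N ->
  ~~ ((M %% T + T - N %% T) %% T == r %% T)%N ->
  O1 A T om g N M (proj r w).
Proof.
move=> Hr Hc.
have [lam [Hl Hs]] := diamond_h_vac_ncond (proj r w) Hr Hc.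
have Hd : diamond A T om g M N (proj r w) vac = diamond_h A T r M N (proj r w) vac.
  rewrite /diamond (bigD1 (Ordinal Hr)) //= big1 ?addr0; last first.
    move=> r' Hr'; rewrite proj_proj //.
    have -> : (nat_of_ord r' == r) = false.
      by apply/eqP => E; move: Hr' => /eqP; apply; apply: val_inj.
    exact: (lin0 (islin_diamond_h_l _ _ _ _)).
  by rewrite proj_proj // eqxx.
have H1 : O1 A T om g N M (lam *: proj r w).
  have -> : lam *: proj r w = diamond A T om g M N (proj r w) vac
            - (diamond_h A T r M N (proj r w) vac - lam *: proj r w).
    by rewrite Hd opprB addrC subrK.
  apply: span_sub; first by apply: Defs.span_gen; left; do 2 eexists.
  exact: Lgen_O1.
by rewrite -[proj r w]scale1r -(mulVf Hl) -scalerA; apply: Defs.span_scale.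
Qed.

Lemma O1_Otilde N M x : O1 A T om g N M x -> Otilde A T om g N M x.
Proof. by move=> H; apply: Defs.span_gen; left. Qed.

Lemma F2 M N w : Otilde A T om g N M (bullet A T om g M M N w vac - w).
Proof.
rewrite -{2}(proj_sum w) /bullet -sumrB; apply: span_sum => r.
case Hc: ((M %% T + T - N %% T) %% T == r %% T)%N.
  by apply: O1_Otilde; apply: Lgen_O1; apply: bullet_h_vac_cond.
have -> : bullet_h A T r M M N (proj r w) vac = 0 by rewrite /bullet_h /= Hc.
rewrite sub0r; apply: span_opp; apply: O1_Otilde; apply: proj_O1 => //.
by rewrite Hc.
Qed.

End Twisted.

Section Main.
Variables (K : fieldType) (V : lmodType K) (A : vertex_algebra V).
Variables (T : nat) (om : K) (g : V -> V).
Hypothesis HK : [pchar K] =i pred0.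
Hypothesis Hom : T.-primitive_root om.
Hypothesis Hg_lin : forall (a : K) (x y : V), g (a *: x + y) = a *: g x + g y.
Hypothesis Hg_vac : g (vvac A) = vvac A.
Hypothesis Hg_ord : forall v : V, iter T g v = v.
Variables (N M : nat).

Local Notation vac := (vvac A).
Local Notation B := (bullet A T om g).
Local Notation O := (Otilde A T om g N M).

Definition eqO x y := O (x - y).

Lemma O0 : O 0. Proof. exact: Defs.span0. Qed.
Lemma OD x y : O x -> O y -> O (x + y). Proof. exact: Defs.span_add. Qed.
Lemma OB x y : O x -> O y -> O (x - y). Proof. exact: span_sub. Qed.

Lemma eqO_O x y : eqO x y -> O y -> O x.
Proof. by move=> H1 H2; rewrite -(subrK y x); apply: OD. Qed.

Lemma eqO_sym x y : eqO x y -> eqO y x.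
Proof. by rewrite /eqO => H; rewrite -opprB; apply: span_opp. Qed.

Lemma eqO_trans x y z : eqO x y -> eqO y z -> eqO x z.
Proof. by rewrite /eqO => H1 H2; rewrite -(subrKA y); apply: OD. Qed.

Lemma eqO_sub x y x' y' : eqO x x' -> eqO y y' -> eqO (x - y) (x' - y').
Proof.
rewrite /eqO => H1 H2.
have -> : x - y - (x' - y') = (x - x') - (y - y').
  by rewrite !opprB addrACA [RHS]addrACA [- y + _]addrC.
exact: OB.
Qed.

Lemma linBl P Q R (x y v : V) : B P Q R (x - y) v = B P Q R x v - B P Q R y v.
Proof. exact: (linB (islin_bullet_l A T om Hg_lin P Q R v)). Qed.
Lemma linBr P Q R (u x y : V) : B P Q R u (x - y) = B P Q R u x - B P Q R u y.
Proof. exact: (linB (islin_bullet_r A T om g P Q R u)). Qed.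

Lemma O2gen u a b c p1 p2 p3 :
  O (B M p3 N u (B M p1 p3 (B p1 p2 p3 a b) c - B M p2 p3 a (B M p1 p2 b c))).
Proof.
apply: Defs.span_gen; right; left; apply: Defs.span_gen.
by exists a, b, c, u, p1, p2, p3.
Qed.

Lemma O3gen p1 p2 z y :
  spn (fun z' => exists x o, O1 A T om g p2 p1 o /\ z' = B p1 p2 N x o) z ->
  O (B M p1 N z y).
Proof.
move=> Hz; apply: Defs.span_gen; right; right; apply: Defs.span_gen.
by exists p1, p2, z, y; split.
Qed.

Lemma O3gen' p1 p2 x o y : O1 A T om g p2 p1 o -> O (B M p1 N (B p1 p2 N x o) y).
Proof. by move=> Ho; apply: (@O3gen p1 p2); apply: Defs.span_gen; exists x, o; split. Qed.

Lemma bvac P Q w : B P Q Q vac w = w.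
Proof. exact: (bullet_vac HK Hom Hg_vac). Qed.

Lemma assocN a b c q1 q2 :
  eqO (B M q1 N (B q1 q2 N a b) c) (B M q2 N a (B M q1 q2 b c)).
Proof. by have := O2gen vac a b c q1 q2 N; rewrite bvac. Qed.

Lemma inner u a b c p1 p2 p3 :
  eqO (B M p3 N u (B M p1 p3 (B p1 p2 p3 a b) c)) (B M p3 N u (B M p2 p3 a (B M p1 p2 b c))).
Proof. by have := O2gen u a b c p1 p2 p3; rewrite linBr. Qed.

Lemma F2' w : eqO (B M M N w vac) w.
Proof. exact: (F2 A HK Hom Hg_lin Hg_ord). Qed.

Lemma claim2 u w : O w -> O (B M N N u w).
Proof.
have lin := islin_bullet_r A T om g M N N u.
elim=> {w} [|w Hw|x y _ Hx _ Hy|a x _ Hx].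
- by rewrite (lin0 lin); exact: O0.
- case: Hw => [Hw|[Hw|Hw]].
  +
    apply: (@eqO_O _ (B M M N (B M N N u w) vac)); first exact: eqO_sym (F2' _).
    exact: O3gen'.
  + elim: Hw => {w} [|w Hw|x y _ Hx _ Hy|a x _ Hx].
    * by rewrite (lin0 lin); exact: O0.
    * case: Hw => [a [b [c [u' [p1 [p2 [p3 ->]]]]]]].
      set X := (B M p1 p3 (B p1 p2 p3 a b) c - B M p2 p3 a (B M p1 p2 b c)).
      apply: (@eqO_O _ (B M p3 N (B p3 N N u u') X)).
        exact: eqO_sym (assocN u u' X p3 N).
      exact: O2gen.
    * by rewrite (linD lin); apply: OD.
    * by rewrite (linZ lin); apply: Defs.span_scale.
  + elim: Hw => {w} [|w Hw|x y _ Hx _ Hy|a x _ Hx].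
    * by rewrite (lin0 lin); exact: O0.
    * case: Hw => [p1 [p2 [z [y [Hz ->]]]]].
      apply: (@eqO_O _ (B M p1 N (B p1 N N u z) y)).
        exact: eqO_sym (assocN u z y p1 N).
      have linz := islin_bullet_r A T om g p1 N N u.
      have liny := islin_bullet_l A T om Hg_lin M p1 N y.
      elim: Hz => {z} [|z Hz|x1 y1 _ Hx1 _ Hy1|a x1 _ Hx1].
      -- by rewrite (lin0 linz) (lin0 liny); exact: O0.
      -- case: Hz => [x [o [Ho ->]]].
         apply: (@eqO_O _ (B M N N u (B M p1 N (B p1 p2 N x o) y))).
           exact: assocN.
         apply: (@eqO_O _ (B M N N u (B M p2 N x (B M p1 p2 o y)))).
           exact: inner.
         apply: (@eqO_O _ (B M p2 N (B p2 N N u x) (B M p1 p2 o y))).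
           exact: eqO_sym (assocN _ _ _ _ _).
         apply: (@eqO_O _ (B M p1 N (B p1 p2 N (B p2 N N u x) o) y)).
           exact: eqO_sym (assocN _ _ _ _ _).
         exact: O3gen'.
      -- by rewrite (linD linz) (linD liny); apply: OD.
      -- by rewrite (linZ linz) (linZ liny); apply: Defs.span_scale.
    * by rewrite (linD lin); apply: OD.
    * by rewrite (linZ lin); apply: Defs.span_scale.
- by rewrite (linD lin); apply: OD.
- by rewrite (linZ lin); apply: Defs.span_scale.
Qed.

Lemma claim3 w v : O w -> O (B M M N w v).
Proof.
have lin := islin_bullet_l A T om Hg_lin M M N v.
elim=> {w} [|w Hw|x y _ Hx _ Hy|a x _ Hx].
- by rewrite (lin0 lin); exact: O0.
- case: Hw => [Hw|[Hw|Hw]].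
  + rewrite -[w in B M M N w v](bvac M N w); exact: O3gen'.
  + elim: Hw => {w} [|w Hw|x y _ Hx _ Hy|a x _ Hx].
    * by rewrite (lin0 lin); exact: O0.
    * case: Hw => [a [b [c [u [p1 [p2 [p3 ->]]]]]]].
      set Z := B p1 p2 p3 a b.
      set W := B M p1 p2 b c.
      set c' := B M M p1 c v.
      set Y := B M M p2 W v - B M p1 p2 b c'.
      apply: (@eqO_O _ (B M p3 N u (B M M p3 (B M p1 p3 Z c - B M p2 p3 a W) v))).
        exact: assocN.
      rewrite linBl linBr.
      apply: (@eqO_O _ (B M p3 N u (B M p2 p3 a (B M p1 p2 b c')) - B M p3 N u (B M p2 p3 a (B M M p2 W v)))).
        apply: eqO_sub.
          apply: eqO_trans; first exact: inner.
          exact: inner.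
        exact: inner.
      rewrite -[X in O X]opprB -!linBr; apply: span_opp.
      apply: (@eqO_O _ (B M p2 N (B p2 p3 N u a) Y)).
        exact: eqO_sym (assocN _ _ _ _ _).
      exact: O2gen.
    * by rewrite (linD lin); apply: OD.
    * by rewrite (linZ lin); apply: Defs.span_scale.
  + elim: Hw => {w} [|w Hw|x y _ Hx _ Hy|a x _ Hx].
    * by rewrite (lin0 lin); exact: O0.
    * case: Hw => [p1 [p2 [z [y [Hz ->]]]]].
      apply: (@eqO_O _ (B M p1 N z (B M M p1 y v))); first exact: assocN.
      exact: O3gen Hz.
    * by rewrite (linD lin); apply: OD.
    * by rewrite (linZ lin); apply: Defs.span_scale.
- by rewrite (linD lin); apply: OD.
- by rewrite (linZ lin); apply: Defs.span_scale.
Qed.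

Lemma claim1 u w : On A T om g N u -> O (B M N N u w).
Proof.
move=> Hu; rewrite -[u in B M N N u w](bvac N N u).
exact: O3gen'.
Qed.

Lemma claim4 w v : On A T om g M v -> O (B M M N w v).
Proof.
move=> Hv; apply: (@eqO_O _ (B M M N (B M M N w v) vac)).
  exact: eqO_sym (F2' _).
exact: O3gen'.
Qed.

End Main.

Unset Implicit Arguments.

Theorem theorem3p8 (K : fieldType) (V : lmodType K) (A : vertex_algebra V)
  (T : nat) (om : K) (g : V -> V)
  (HK : [pchar K] =i pred0)
  (Hom : T.-primitive_root om)
  (Hg_lin : forall (a : K) (x y : V), g (a *: x + y) = a *: g x + g y)
  (Hg_vac : g (vvac A) = vvac A)
  (Hg_hom : forall (u : V) (k : int) (v : V), g (vY A u k v) = vY A (g u) k (g v))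
  (Hg_ord : forall v : V, iter T g v = v)
  (N M : nat) :
  let O := Otilde A T om g N M in
  let bl := bullet A T om g M N N in
  let br := bullet A T om g M M N in
  let prodn := bullet A T om g N N N in
  let prodm := bullet A T om g M M M in
  (* well-definedness of the left action *)
  (forall u w, On A T om g N u -> O (bl u w)) /\
  (forall u w, O w -> O (bl u w)) /\
  (* well-definedness of the right action *)
  (forall w v, O w -> O (br w v)) /\
  (forall w v, On A T om g M v -> O (br w v)) /\
  (* left module axioms *)
  (forall u1 u2 w, O (bl (prodn u1 u2) w - bl u1 (bl u2 w))) /\
  (forall w, O (bl (vvac A) w - w)) /\
  (* right module axioms *)
  (forall w v1 v2, O (br (br w v1) v2 - br w (prodm v1 v2))) /\
  (forall w, O (br w (vvac A) - w)) /\
  (* compatibility of the two actions *)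
  (forall u w v, O (br (bl u w) v - bl u (br w v))).
Proof.
move=> O bl br prodn prodm; rewrite /O /bl /br /prodn /prodm.
split; first by move=> u w Hu; apply: claim1.
split; first by move=> u w Hw; apply: claim2.
split; first by move=> w v Hw; apply: claim3.
split; first by move=> w v Hv; apply: claim4.
split; first by move=> u1 u2 w; apply: assocN.
split; first by move=> w; rewrite (bvac HK Hom Hg_vac) subrr; apply: O0.
split; first by move=> w v1 v2; apply: assocN.
split; first by move=> w; apply: F2'.
by move=> u w v; apply: assocN.
Qed.
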